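(* Let $\mathcal N=\{\mathbb 1\}\cup\bigcup_{i=1}^{n-1}\{U^{(1)}_{2,1}U^{(2)}_{3,2}\cdots U^{(i)}_{i+1,i}:U^{(j)}\in\{\mathrm{SWAP},\mathrm{CNOT}\}\}$, where the $U^{(j)}$ are chosen independently. Then $$M=\sum_{z\in\mathbb{F}_2^n}|\hat Z_z)(\hat Z_z|=|\hat{\mathbb 1})(\hat{\mathbb 1}|+\sum_{g\in\mathcal N}\omega(g)^\dagger|\hat Z_1)(\hat Z_1|\omega(g).$$
   Context: $d=2^n$; $(A|B)=\mathrm{Tr}(A^\dagger B)$; $|A)(B|$ is the superoperator $C\mapsto(B|C)A$; products of superoperators are compositions. $\omega(g)(A)=gAg^\dagger$, $\omega(g)^\dagger(A)=g^\dagger Ag$. $M=\sum_{x\in\mathbb{F}_2^n}|E_x)(E_x|$ with $E_x=|x\rangle\langle x|$. $Z_z=\bigotimes_iZ^{z_i}$, $\hat Z_z=Z_z/\sqrt d$, $\hat{\mathbb 1}=\mathbb 1/\sqrt d$, $Z_1=Z\otimes\mathbb 1^{\otimes(n-1)}$. For a two-qubit unitary $U$, $U_{i,j}$ denotes $U$ applied to the ordered qubit pair $(i,j)$; in particular $\mathrm{CNOT}_{j+1,j}$ has control qubit $j+1$ and target qubit $j$. *)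

(* Defs.v *)
From HB Require Import structures.
From mathcomp Require Import all_boot all_order all_algebra.
From mathcomp Require Import algC.
Set Implicit Arguments. Unset Strict Implicit. Unset Printing Implicit Defensive.
Import Order.TTheory GRing.Theory Num.Theory.
Local Open Scope ring_scope.

(* Operators on n qubits: 'M[algC]_(2^n).  Basis index k : 'I_(2^n)
   encodes |x_1 ... x_n> with qubit 1 the most significant bit
   (qubit 1 = first tensor factor).  Qubits are numbered 1..n. *)
Definition qbit (n : nat) (k : 'I_(2 ^ n)) (q : nat) : bool :=
  odd (k %/ 2 ^ (n - q)).

Definition adj (n : nat) (A : 'M[algC]_(2 ^ n)) : 'M[algC]_(2 ^ n) :=
  (map_mx Num.conj A)^T.

Definition hs (n : nat) (A B : 'M[algC]_(2 ^ n)) : algC := \tr (adj A *m B).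

(* the superoperator |A)(B| : C |-> (B|C) A *)
Definition kb (n : nat) (A B : 'M[algC]_(2 ^ n)) : 'M[algC]_(2 ^ n) -> 'M[algC]_(2 ^ n) :=
  fun C => hs B C *: A.

Definition omega (n : nat) (g : 'M[algC]_(2 ^ n)) : 'M[algC]_(2 ^ n) -> 'M[algC]_(2 ^ n) :=
  fun A => g *m A *m adj g.
Definition omega_dag (n : nat) (g : 'M[algC]_(2 ^ n)) : 'M[algC]_(2 ^ n) -> 'M[algC]_(2 ^ n) :=
  fun A => adj g *m A *m g.

Definition Ebasis (n : nat) (x : 'I_(2 ^ n)) : 'M[algC]_(2 ^ n) := delta_mx x x.

Definition Msup (n : nat) (C : 'M[algC]_(2 ^ n)) : 'M[algC]_(2 ^ n) :=
  \sum_(x : 'I_(2 ^ n)) kb (Ebasis x) (Ebasis x) C.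

(* Z_z = tensor_i Z^{z_i}; z i is the exponent on qubit i.+1.
   Entry-wise: diagonal with entries prod_i (-1)^{z_i x_i}. *)
Definition Zz (n : nat) (z : {ffun 'I_n -> bool}) : 'M[algC]_(2 ^ n) :=
  diag_mx (\row_(k < 2 ^ n)
    \prod_(i < n) (if z i && qbit k i.+1 then (-1 : algC) else 1)).

Definition sqd (n : nat) : algC := sqrtC (2 ^ n)%:R.

Definition Zhat (n : nat) (z : {ffun 'I_n -> bool}) : 'M[algC]_(2 ^ n) :=
  (sqd n)^-1 *: Zz z.
Definition Ihat (n : nat) : 'M[algC]_(2 ^ n) := (sqd n)^-1 *: 1%:M.

(* Z_1 = Z (x) 1^{(n-1)} : z = indicator of qubit 1 *)
Definition z1 (n : nat) : {ffun 'I_n -> bool} := [ffun i : 'I_n => (i : nat) == 0%N].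
Definition Zhat1 (n : nat) : 'M[algC]_(2 ^ n) := Zhat (z1 n).

Definition basis_gate (n : nat) (f : (nat -> bool) -> nat -> bool) : 'M[algC]_(2 ^ n) :=
  \matrix_(k, l) (if [forall m : 'I_n, qbit k m.+1 == f (qbit l) m.+1] then 1 else 0).

Definition SWAP (n i j : nat) : 'M[algC]_(2 ^ n) :=
  basis_gate n (fun b m => b (if m == i then j else if m == j then i else m)).

(* CNOT_{c,t} : control qubit c, target qubit t *)
Definition CNOT (n c t : nat) : 'M[algC]_(2 ^ n) :=
  basis_gate n (fun b m => if m == t then addb (b t) (b c) else b m).

Definition gate_of (n : nat) (cnot : bool) (i j : nat) : 'M[algC]_(2 ^ n) :=
  if cnot then CNOT n i j else SWAP n i j.

(* U^(1)_{2,1} U^(2)_{3,2} ... U^(i)_{i+1,i}, for choices U : 'I_i -> bool *)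
Definition chain (n i : nat) (U : {ffun 'I_i -> bool}) : 'M[algC]_(2 ^ n) :=
  \prod_(j < i) gate_of n (U j) j.+2 j.+1.

Definition Nterm (n : nat) (g C : 'M[algC]_(2 ^ n)) : 'M[algC]_(2 ^ n) :=
  omega_dag g (kb (Zhat1 n) (Zhat1 n) (omega g C)).

(* Main.v *)
Require Import Defs.
From HB Require Import structures.
From mathcomp Require Import all_boot all_order all_algebra.
From mathcomp Require Import algC zify ring.
Set Implicit Arguments. Unset Strict Implicit. Unset Printing Implicit Defensive.
Import GRing.Theory Num.Theory.
Local Open Scope ring_scope.

Definition qb (n k q : nat) : bool := odd (k %/ 2 ^ (n - q)).

Lemma qb_S n k q : (q <= n)%N -> qb n.+1 k q = qb n k./2 q.
Proof.
move=> hq; rewrite /qb subSn // expnS divnMA divn2 //.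
Qed.

Lemma qb_last n k : qb n.+1 k n.+1 = odd k.
Proof. by rewrite /qb subnn expn0 divn1. Qed.

Lemma qb_uniq n a b : (a < 2 ^ n)%N -> (b < 2 ^ n)%N ->
  (forall q, (0 < q <= n)%N -> qb n a q = qb n b q) -> a = b.
Proof.
elim: n a b => [|n IH] a b ha hb H.
  by move: ha hb; rewrite expn0 !ltnS !leqn0 => /eqP -> /eqP ->.
have h2 : a./2 = b./2.
  apply: IH.
  - by rewrite -divn2 ltn_divLR // mulnC -expnS.
  - by rewrite -divn2 ltn_divLR // mulnC -expnS.
  - move=> q /andP [q0 qn]; rewrite -!qb_S //; apply: H.
    by rewrite q0 /= (leq_trans qn).
have ho : odd a = odd b.
  by have := H n.+1 (leqnn _); rewrite !qb_last.

by rewrite -(odd_double_half a) -(odd_double_half b) h2 ho.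
Qed.

Lemma qb_exists n (bs : nat -> bool) : exists a, (a < 2 ^ n)%N /\
  forall q, (0 < q <= n)%N -> qb n a q = bs q.
Proof.
elim: n => [|n [a [ha H]]].
  by exists 0%N; split => // q /andP [q0 qn]; lia.
exists (bs n.+1 + a.*2)%N; split.
  rewrite expnS -muln2; case: (bs n.+1) => /=; lia.
move=> q /andP [q0]; rewrite leq_eqVlt => /orP [/eqP ->|qn].
  by rewrite qb_last oddD odd_double addbF oddb.
by rewrite qb_S // half_bit_double H // q0.
Qed.

Definition vz n (z : {ffun 'I_n -> bool}) (b : nat -> bool) : algC :=
  \prod_(i < n) (if z i && b i.+1 then -1 else 1).

Lemma vz_ext n z b b' : (forall q, (0 < q <= n)%N -> b q = b' q) -> @vz n z b = vz z b'.
Proof. by move=> H; apply: eq_bigr => i _; rewrite H // ltn_ord. Qed.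

Lemma bits_eq n (a b : 'I_(2 ^ n)) :
  (forall q, (0 < q <= n)%N -> qbit a q = qbit b q) -> a = b.
Proof. by move=> H; apply: val_inj; exact: qb_uniq (ltn_ord a) (ltn_ord b) H. Qed.

Lemma forall_bitsP n (a : 'I_(2 ^ n)) (bs : nat -> bool) :
  reflect (forall q, (0 < q <= n)%N -> qbit a q = bs q)
          [forall m : 'I_n, qbit a m.+1 == bs m.+1].
Proof.
apply: (iffP forallP) => H.
  move=> q /andP [q0 qn]; have hq : (q.-1 < n)%N by lia.
  by have := H (Ordinal hq); rewrite /= prednK // => /eqP.
by move=> m; apply/eqP; apply: H; rewrite /= ltn_ord.
Qed.

Lemma gate_conj n f (z z' : {ffun 'I_n -> bool}) :
 (forall b b', (forall q, (0 < q <= n)%N -> b q = b' q) ->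
    forall q, (0 < q <= n)%N -> f b q = f b' q) ->
 (forall b q, (0 < q <= n)%N -> f (f b) q = b q) ->
 (forall b, vz z (f b) = vz z' b) ->
 adj (basis_gate n f) *m Zz z *m basis_gate n f = Zz z'.
Proof.
move=> H1 H2 Hv; apply/matrixP => k l.
have [a0 [ha0 Ha0]] := qb_exists n (f (qbit k)).
pose a : 'I_(2 ^ n) := Ordinal ha0.
have Pk : forall x : 'I_(2 ^ n), basis_gate n f x k = (x == a)%:R.
  move=> x; rewrite mxE; case: forall_bitsP => [Hx|Hx].
    have -> : x = a by apply: bits_eq => q hq; rewrite Hx // -Ha0.
    by rewrite eqxx.
  case: eqP => // ex; case: Hx => q hq; rewrite ex; exact: Ha0.
have PE : forall x y, basis_gate n f x y =
   if [forall m : 'I_n, qbit x m.+1 == f (qbit y) m.+1] then 1 else 0.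
  by move=> x y; rewrite mxE.
move: (basis_gate n f) Pk PE => P Pk PE.
rewrite /Zz mul_mx_diag mxE.
rewrite (eq_bigr (fun j => if j == a then vz z (qbit a) * P a l else 0)); last first.
  move=> j _; rewrite !mxE Pk rmorph_nat; case: eqP => [->|_]; first by rewrite mul1r.
  by rewrite !mul0r.
rewrite -big_mkcond big_pred1_eq.
rewrite (vz_ext z (b' := f (qbit k))) // Hv.
rewrite [RHS]mxE mxE; case: eqP => [<-|nkl].
  by rewrite Pk eqxx mulr1.
rewrite PE; case: forall_bitsP => [Hx|_]; last by rewrite mulr0.
case: nkl; apply: bits_eq => q hq.
rewrite -(H2 (qbit k) q hq) -(H2 (qbit l) q hq); apply: H1 => // q' hq'.
by rewrite -Ha0 //; apply: Hx.
Qed.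

Lemma adjM n (A B : 'M[algC]_(2 ^ n)) : adj (A *m B) = adj B *m adj A.
Proof. by rewrite /adj map_mxM trmx_mul. Qed.

Lemma adj1 n : adj (1%:M : 'M[algC]_(2 ^ n)) = 1%:M.
Proof. by rewrite /adj map_scalar_mx rmorph1 tr_scalar_mx. Qed.

Definition zof n i (U : {ffun 'I_i -> bool}) : {ffun 'I_n -> bool} :=
  [ffun j : 'I_n => if (insub (val j) : option 'I_i) is Some k then U k
                    else (val j == i)].

Lemma zof_lt n i (U : {ffun 'I_i -> bool}) (j : 'I_n) (h : (j < i)%N) :
  zof n U j = U (Ordinal h).
Proof. by rewrite ffunE insubT /=; congr (U _); apply: val_inj. Qed.

Lemma zof_ge n i (U : {ffun 'I_i -> bool}) (j : 'I_n) : (i <= j)%N ->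
  zof n U j = (val j == i).
Proof. by move=> h; rewrite ffunE insubF // ltnNge h. Qed.

Lemma prod_split2 n (p q : 'I_n) (F G : 'I_n -> algC) : p != q ->
  (forall m, m != p -> m != q -> F m = G m) -> F p * F q = G p * G q ->
  \prod_m F m = \prod_m G m.
Proof.
move=> pq H Hpq; have qp : q != p by rewrite eq_sym.
rewrite (bigD1 p) //= (bigD1 q qp) [RHS](bigD1 p) //= (bigD1 q qp) /= !mulrA Hpq.
by congr (_ * _); apply: eq_bigr => m /andP [mp mq]; apply: H.
Qed.

Lemma zof_step n i (U' : {ffun 'I_i -> bool}) (U : {ffun 'I_i.+1 -> bool})
  (HU : forall j : 'I_i, U (widen_ord (leqnSn i) j) = U' j) (m : 'I_n) :
  val m != i -> val m != i.+1 -> zof n U' m = zof n U m.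
Proof.
move=> h1 h2; case: (ltnP m i) => h.
  rewrite (zof_lt U' h) (zof_lt U (ltnW h)) -HU; congr (U _); exact: val_inj.
rewrite !zof_ge //; last by rewrite ltn_neqAle eq_sym h1 h.
by rewrite (negbTE h1) (negbTE h2).
Qed.

Lemma gate_step n i (U' : {ffun 'I_i -> bool}) (U : {ffun 'I_i.+1 -> bool})
  (HU : forall j : 'I_i, U (widen_ord (leqnSn i) j) = U' j) (hi : (i.+1 < n)%N) :
  adj (gate_of n (U ord_max) i.+2 i.+1) *m Zz (zof n U') *m
    gate_of n (U ord_max) i.+2 i.+1 = Zz (zof n U).
Proof.
pose p : 'I_n := Ordinal (ltnW hi); pose q : 'I_n := Ordinal hi.
have pq : p != q by rewrite -val_eqE /=; lia.
have zp' : zof n U' p = true by rewrite zof_ge //= eqxx.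
have zq' : zof n U' q = false by rewrite zof_ge //= (gtn_eqF (ltnSn i)).
have zp : zof n U p = U ord_max.
  by rewrite (@zof_lt n i.+1 U p (ltnSn i)); congr (U _); apply: val_inj.
have zq : zof n U q = true by rewrite zof_ge //= eqxx.
have zo : forall m, m != p -> m != q -> zof n U' m = zof n U m.
  by move=> m mp mq; apply: zof_step.
rewrite /gate_of; case: (U ord_max) zp => zp.
- rewrite /CNOT; apply: gate_conj.
  + move=> b b' H r hr /=; case: eqP => _; last exact: H.
    by rewrite !H //; lia.
  + move=> b r hr /=; case: eqP => [->|//].
    by rewrite eqxx (gtn_eqF (ltnSn _)) -addbA addbb addbF.
  + move=> b; apply: (prod_split2 pq).
      move=> m mp mq; rewrite zo //.
      have -> : (m.+1 == i.+1) = false.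
        by apply/negbTE; move: mp; apply: contra => /eqP [] e; rewrite -val_eqE /= e.
      by [].
    rewrite zp' zq' zp zq /= eqxx.
    by case: (b i.+1); case: (b i.+2); rewrite /= ?mulrNN ?mulr1 ?mul1r.
- rewrite /SWAP; apply: gate_conj.
  + move=> b b' H r hr /=; apply: H.
    by move: hr; case: ifP => _; [lia|case: ifP => _; lia].
  + move=> b r hr /=; congr b.
    have [->|h1] := eqVneq r i.+2.
      by rewrite eqxx (ltn_eqF (ltnSn _)).
    have [->|h2] := eqVneq r i.+1.
      by rewrite eqxx.
    by rewrite (negbTE h1) (negbTE h2).
  + move=> b; apply: (prod_split2 pq).
      move=> m mp mq; rewrite zo //.
      have -> : (m.+1 == i.+2) = false.
        by apply/negbTE; move: mq; apply: contra => /eqP [] e; rewrite -val_eqE /= e.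
      have -> : (m.+1 == i.+1) = false.
        by apply/negbTE; move: mp; apply: contra => /eqP [] e; rewrite -val_eqE /= e.
      by [].
    rewrite zp' zq' zp zq /= !eqxx (ltn_eqF (ltnSn _)).
    by rewrite mulr1 mul1r.
Qed.

Lemma chain_conj n i (U : {ffun 'I_i -> bool}) : (i < n)%N ->
  adj (chain n U) *m Zz (z1 n) *m chain n U = Zz (zof n U).
Proof.
elim: i U => [|i IH] U hi.
  have -> : chain n U = 1%:M by rewrite /chain big_ord0.
  rewrite adj1 mul1mx mulmx1; congr Zz; apply/ffunP => m.
  by rewrite zof_ge // ffunE.
pose U' : {ffun 'I_i -> bool} := [ffun j => U (widen_ord (leqnSn i) j)].
have HU : forall j, U (widen_ord (leqnSn i) j) = U' j by move=> j; rewrite ffunE.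
have -> : chain n U = chain n U' *m gate_of n (U ord_max) i.+2 i.+1.
  rewrite /chain big_ord_recr /= -mulmxE; congr (_ *m _).
  by apply: eq_bigr => j _; rewrite HU.
rewrite adjM.
have -> : forall A B G : 'M[algC]_(2 ^ n), adj G *m adj A *m B *m (A *m G) =
   adj G *m (adj A *m B *m A) *m G by move=> A B G; rewrite !mulmxA.
by rewrite IH ?(ltnW hi) // gate_step.
Qed.

Lemma vz_conj n z b : (@vz n z b)^* = vz z b.
Proof.
rewrite /vz rmorph_prod; apply: eq_bigr => i _.
by case: ifP; rewrite ?rmorphN rmorph1.
Qed.

Lemma sqd_inv_conj n : ((sqd n)^-1)^* = (sqd n)^-1.
Proof. by apply: geC0_conj; rewrite invr_ge0 sqrtC_ge0 ler0n. Qed.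

Lemma conjMMn (a b : algC) k : (a * (b *+ k))^* = a^* * (b^* *+ k).
Proof. by rewrite rmorphM rmorphMn. Qed.

Lemma adjZhat n z : adj (@Zhat n z) = Zhat z.
Proof.
apply/matrixP => i j; rewrite /adj /Zhat /Zz !mxE conjMMn sqd_inv_conj.
rewrite eq_sym; have [->|nij] := eqVneq i j; first by rewrite vz_conj.
by rewrite !mulr0n.
Qed.

Lemma Nterm_kb n (g C : 'M[algC]_(2 ^ n)) z' :
  adj g *m Zz (z1 n) *m g = Zz z' -> Nterm g C = kb (Zhat z') (Zhat z') C.
Proof.
move=> H.
have E : adj g *m Zhat1 n *m g = Zhat z'.
  by rewrite /Zhat1 /Zhat -scalemxAr -scalemxAl H.
rewrite /Nterm /omega_dag /kb /omega -scalemxAr -scalemxAl E; congr (_ *: _).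
rewrite /hs !adjZhat /Zhat1 -E !mulmxA mxtrace_mulC !mulmxA.
by rewrite /Zhat1.
Qed.

Definition key n (z : {ffun 'I_n -> bool}) : nat := \max_(j < n | z j) j.+1.

Lemma key_le n (z : {ffun 'I_n -> bool}) : (@key n z <= n)%N.
Proof. by apply/bigmax_leqP => j _; apply: ltn_ord. Qed.

Lemma key_gt n (z : {ffun 'I_n -> bool}) (j : 'I_n) : z j -> (j < @key n z)%N.
Proof. by move=> zj; apply: (leq_bigmax_cond (F := fun j : 'I_n => j.+1)). Qed.

Lemma key0 n (z : {ffun 'I_n -> bool}) : (@key n z == 0%N) = (z == [ffun => false]).
Proof.
apply/idP/idP.
  move=> /eqP k0; apply/eqP/ffunP => j; rewrite ffunE.
  by apply/negbTE/negP => /key_gt; rewrite k0.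
move=> /eqP ->; rewrite -leqn0; apply/bigmax_leqP => j; by rewrite ffunE.
Qed.

Lemma keyS n (z : {ffun 'I_n -> bool}) (i : nat) (hi : (i < n)%N) : @key n z = i.+1 ->
  z (Ordinal hi) /\ forall j : 'I_n, (i < j)%N -> z j = false.
Proof.
move=> kz; split.
  apply/negP => nz.
  have : (key z <= i)%N.
    apply/bigmax_leqP => j zj; rewrite ltn_neqAle -ltnS -kz key_gt // andbT.
    by apply/negP => /eqP e; move: zj; have -> : j = Ordinal hi by apply: val_inj.
  by rewrite kz ltnn.
move=> j ij; apply/negbTE/negP => /key_gt; rewrite kz ltnS leqNgt ij //.
Qed.

Lemma key_zof n i (U : {ffun 'I_i -> bool}) : (i < n)%N -> key (zof n U) = i.+1.
Proof.
move=> hi; apply/eqP; rewrite eqn_leq; apply/andP; split.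
  apply/bigmax_leqP => j; case: (ltnP i j) => h; last by [].
  by rewrite zof_ge ?(ltnW h) // gtn_eqF.
have := @key_gt n (zof n U) (Ordinal hi); rewrite zof_ge //= eqxx; exact.
Qed.

Lemma sum_split n (V : nmodType) (K : {ffun 'I_n -> bool} -> V) :
  \sum_z K z = K [ffun => false] +
    \sum_(i < n) \sum_(U : {ffun 'I_i -> bool}) K (zof n U).
Proof.
rewrite (partition_big (fun z => inord (key z) : 'I_n.+1) predT) //=.
rewrite big_ord_recl; congr (_ + _).
  rewrite (eq_bigl (fun z => z == [ffun => false])) ?big_pred1_eq // => z.
  by rewrite -val_eqE /= inordK ?ltnS ?key_le // key0.
apply: eq_bigr => i _.
have hi := ltn_ord i.
rewrite (eq_bigl (fun z => key z == i.+1)); last first.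
  by move=> z; rewrite -val_eqE /= inordK ?ltnS ?key_le.
rewrite (reindex_onto (fun U : {ffun 'I_i -> bool} => zof n U)
   (fun z => [ffun k : 'I_i => z (widen_ord (ltnW hi) k)])); last first.
  move=> z /eqP kz; have [zi zg] := keyS hi kz.
  apply/ffunP => j; case: (ltnP j i) => h.
    by rewrite zof_lt ffunE; congr (z _); apply: val_inj.
  rewrite zof_ge //; case: eqP => [e|ne].
    by rewrite -zi; congr (z _); apply: val_inj.
  by rewrite zg // ltn_neqAle eq_sym h andbT; apply/eqP.
apply: eq_bigl => U; rewrite key_zof // eqxx /=.
apply/eqP/ffunP => k; rewrite ffunE (@zof_lt n i U (widen_ord (ltnW hi) k) (ltn_ord k)).
by congr (U _); apply: val_inj.
Qed.

Lemma orth n (x y : 'I_(2 ^ n)) :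
  \sum_(z : {ffun 'I_n -> bool}) vz z (qbit x) * vz z (qbit y) =
    if x == y then (2 ^ n)%:R else 0.
Proof.
pose F := fun (i : 'I_n) (b : bool) =>
  (if b && qbit x i.+1 then -1 else 1) * (if b && qbit y i.+1 then (-1 : algC) else 1).
rewrite (eq_bigr (fun z : {ffun 'I_n -> bool} => \prod_i F i (z i))); last first.
  by move=> z _; rewrite /vz -big_split.
rewrite -(bigA_distr_bigA F) /F.
rewrite (eq_bigr (fun i : 'I_n => (if qbit x i.+1 then -1 else 1) *
    (if qbit y i.+1 then -1 else 1) + 1)); last by move=> i _; rewrite big_bool /= mulr1.
case: eqP => [<-|nxy].
  rewrite (eq_bigr (fun _ => 2%:R)); last first.
    by move=> i _; case: (qbit x i.+1); rewrite ?mulrNN mulr1.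
  by rewrite prodr_const card_ord natrX.
have : ~~ [forall m : 'I_n, qbit x m.+1 == qbit y m.+1].
  by apply/negP => /forall_bitsP H; apply: nxy; apply: bits_eq.
rewrite negb_forall => /existsP [m /negP hm].
rewrite (bigD1 m) //=; apply/eqP; rewrite mulf_eq0; apply/orP; left.
by move: hm; case: (qbit x m.+1); case: (qbit y m.+1) => //= _;
   rewrite ?mulrN1 ?mulN1r ?mulr1 ?addNr ?addrN.
Qed.

Lemma trE m (A B : 'M[algC]_m) : \tr (A *m B) = \sum_i \sum_j A i j * B j i.
Proof. by rewrite /mxtrace; apply: eq_bigr => i _; rewrite mxE. Qed.

Lemma sum_delta m (x : 'I_m) (F : 'I_m -> algC) :
  \sum_i (if i == x then F i else 0) = F x.
Proof. by rewrite -big_mkcond big_pred1_eq. Qed.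

Lemma hsE n x (C : 'M[algC]_(2 ^ n)) : hs (Ebasis x) C = C x x.
Proof.
rewrite /hs trE.
rewrite (eq_bigr (fun i => if i == x then C x x else 0)); first exact: sum_delta.
move=> i _.
rewrite (eq_bigr (fun j => if j == x then (if i == x then C x x else 0) else 0)).
  by rewrite sum_delta.
move=> j _; rewrite !mxE conjC_nat.
by case: (eqVneq i x) => [->|ne]; case: (eqVneq j x) => [->|ne'];
  rewrite ?eqxx //= ?mul1r // ?(eq_sym x) ?(negbTE ne) ?(negbTE ne') ?andbF ?mul0r.
Qed.

Lemma hsZ n z (C : 'M[algC]_(2 ^ n)) :
  hs (@Zhat n z) C = (sqd n)^-1 * \sum_y vz z (qbit y) * C y y.
Proof.
rewrite /hs adjZhat trE mulr_sumr; apply: eq_bigr => i _.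
rewrite (eq_bigr (fun j => if j == i then (sqd n)^-1 * (vz z (qbit i) * C i i) else 0)).
  by rewrite sum_delta.
move=> j _; rewrite !mxE; case: (eqVneq j i) => [->|ne].
  by rewrite mulr1n mulrA.
by rewrite mulr0n mulr0 mul0r.
Qed.

Lemma sqd2 n : (sqd n)^-1 * (sqd n)^-1 * (2 ^ n)%:R = 1 :> algC.
Proof.
rewrite -invfM -expr2 /sqd sqrtCK mulVf //.
by rewrite pnatr_eq0 -lt0n expn_gt0.
Qed.

Lemma part1 n (C : 'M[algC]_(2 ^ n)) :
  Msup C = \sum_(z : {ffun 'I_n -> bool}) kb (Zhat z) (Zhat z) C.
Proof.
apply/matrixP => a b; rewrite /Msup /kb !summxE.
rewrite (eq_bigr (fun x => if x == a then (if a == b then C a a else 0) else 0)); last first.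
  move=> x _; rewrite mxE hsE !mxE.
  case: (eqVneq x a) => [->|ne]; last by rewrite /= mulr0.
  by rewrite /= ?eqxx /= eq_sym; case: eqP => _; rewrite ?mulr1 ?mulr0.
rewrite sum_delta.
case: (eqVneq a b) => [<-|ne]; last first.
  by rewrite big1 // => z _; rewrite !mxE (negbTE ne) mulr0n !mulr0.
rewrite (eq_bigr (fun z => \sum_y (sqd n)^-1 * (sqd n)^-1 * C y y *
                     (vz z (qbit y) * vz z (qbit a)))); last first.
  move=> z _; rewrite mxE hsZ !mxE eqxx mulr1n -[\prod_(i < n) _]/(vz z (qbit a)).
  rewrite -mulrA mulr_suml mulr_sumr; apply: eq_bigr => y _; ring.
rewrite exchange_big /=.
rewrite (eq_bigr (fun y => if y == a then C a a else 0)); first by rewrite sum_delta.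
move=> y _; rewrite -mulr_sumr orth.
case: eqP => [->|_]; last by rewrite mulr0.
by rewrite mulrAC sqd2 mul1r.
Qed.

Unset Implicit Arguments.

Theorem lemma2 (n : nat) (hn : (0 < n)%N) (C : 'M[algC]_(2 ^ n)) :
  Msup C = \sum_(z : {ffun 'I_n -> bool}) kb (Zhat z) (Zhat z) C /\
  \sum_(z : {ffun 'I_n -> bool}) kb (Zhat z) (Zhat z) C =
    kb (Ihat n) (Ihat n) C
    + (Nterm 1%:M C
       + \sum_(1 <= i < n) \sum_(U : {ffun 'I_i -> bool}) Nterm (chain n U) C).
Proof.
split; first exact: part1.
rewrite (sum_split (fun z => kb (Zhat z) (Zhat z) C)).
have -> : Ihat n = Zhat [ffun => false].
  rewrite /Ihat /Zhat; congr (_ *: _); apply/matrixP => i j; rewrite !mxE.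
  by rewrite big1 // => k _; rewrite ffunE.
congr (_ + _).
rewrite -(big_mkord xpredT (fun i => \sum_(U : {ffun 'I_i -> bool})
            kb (Zhat (zof n U)) (Zhat (zof n U)) C)).
rewrite big_ltn //; congr (_ + _).
  rewrite (@Nterm_kb n 1%:M C (z1 n)); last by rewrite adj1 mul1mx mulmx1.
  rewrite (eq_bigr (fun _ => kb (Zhat (z1 n)) (Zhat (z1 n)) C)).
    by rewrite sumr_const card_ffun !card_ord expn0.
  move=> U _; congr (kb (Zhat _) (Zhat _) C); apply/ffunP => m;
    by rewrite zof_ge // ffunE.
apply: eq_big_nat => i /andP [_ hi]; apply: eq_bigr => U _.
by rewrite (Nterm_kb _ (chain_conj U hi)).
Qed.
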